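(* Let $\mathit{VI}$ be a finite set of variables with $\#\mathit{VI}=n$, let $sh_1,sh_2\in\mathit{SH}$ and $1\le k\le n$. If $\rho_{\mathit{TSD}_k}(sh_1)=\rho_{\mathit{TSD}_k}(sh_2)$ then, for each $\sigma\in\mathit{Subst}$, each $sh'\in\mathit{SH}$ and each $V\in\wp(\mathit{VI})$: $\rho_{\mathit{TSD}_k}(\mathrm{amgu}(sh_1,\sigma))=\rho_{\mathit{TSD}_k}(\mathrm{amgu}(sh_2,\sigma))$, $\rho_{\mathit{TSD}_k}(sh'\cup sh_1)=\rho_{\mathit{TSD}_k}(sh'\cup sh_2)$, and $\rho_{\mathit{TSD}_k}(\mathrm{proj}(sh_1,V))=\rho_{\mathit{TSD}_k}(\mathrm{proj}(sh_2,V))$.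
   Context: $\mathit{SG}=\wp(\mathit{VI})\setminus\{\emptyset\}$ and $\mathit{SH}=\wp(\mathit{SG})$. $\rho_{\mathit{TSD}_k}(sh)=\{\,S\in\mathit{SG}\mid \forall T\subseteq S:\ \#T<k\implies S=\bigcup\{U\in sh\mid T\subseteq U\subseteq S\}\,\}$. Terms are first-order terms over variables; $\mathrm{vars}(t)$ is the set of variables of $t$. A binding is $x\mapsto t$ with $x$ a variable and $t\ne x$ a term; $\mathit{Subst}$ is the set of idempotent substitutions (finite sets of bindings), here with all variables in $\mathit{VI}$. Operations on $\mathit{SH}$: $\mathrm{bin}(sh_1,sh_2)=\{S_1\cup S_2\mid S_1\in sh_1,S_2\in sh_2\}$; $sh^\star=\{S\in\mathit{SG}\mid\exists sh'\subseteq sh: S=\bigcup sh'\}$; $\mathrm{rel}(V,sh)=\{S\in sh\mid S\cap V\ne\emptyset\}$; for a binding $x\mapsto t$ with $v_x=\{x\}$, $v_t=\mathrm{vars}(t)$, $v_{xt}=v_x\cup v_t$: $\mathrm{amgu}(sh,x\mapsto t)=(sh\setminus\mathrm{rel}(v_{xt},sh))\cup\mathrm{bin}(\mathrm{rel}(v_x,sh)^\star,\mathrm{rel}(v_t,sh)^\star)$; extended to substitutions by $\mathrm{amgu}(sh,\emptyset)=sh$ and $\mathrm{amgu}(sh,\{x\mapsto t\}\cup\sigma)=\mathrm{amgu}(\mathrm{amgu}(sh,x\mapsto t),\sigma\setminus\{x\mapsto t\})$. Projection: $\mathrm{proj}(sh,V)=\{S\cap V\mid S\in sh, S\cap V\ne\emptyset\}\cup\{\{x\}\mid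 x\in\mathit{VI}\setminus V\}$. *)

(* Defs.v *)
From mathcomp Require Import all_boot.
From Stdlib Require List.
Set Implicit Arguments. Unset Strict Implicit. Unset Printing Implicit Defensive.

Section SharingDefs.
Variable VI : finType.

(* SG = nonempty subsets of VI; an element of SH is a set of elements of SG,
   i.e. a set of subsets of VI not containing the empty set. *)
Definition isSH (sh : {set {set VI}}) : Prop := set0 \notin sh.

Definition rhoTSD (k : nat) (sh : {set {set VI}}) : {set {set VI}} :=
  [set S : {set VI} | (S != set0) &&
     [forall T : {set VI}, ((T \subset S) && (#|T| < k)) ==>
        (S == \bigcup_(U in sh | (T \subset U) && (U \subset S)) U)]].

Inductive term : Type := Var of VI | Fn of nat & seq term.

Fixpoint vars_seq (t : term) : seq VI :=
  match t with
  | Var x => [:: x]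
  | Fn _ ts => flatten (map vars_seq ts)
  end.

Definition vars (t : term) : {set VI} := [set x | x \in vars_seq t].

Definition binding := (VI * term)%type.

Definition is_subst (sigma : seq binding) : Prop :=
  [/\ uniq (map fst sigma),
       (forall b, List.In b sigma -> b.2 <> Var b.1)
     & (forall b1 b2, List.In b1 sigma -> List.In b2 sigma ->
          b1.1 \notin vars b2.2)].
(* conjuncts: a finite function (each variable bound at most once);
   each binding x |-> t has t <> x; idempotence (no domain variable
   occurs in any bound term). *)

Definition bin (sh1 sh2 : {set {set VI}}) : {set {set VI}} :=
  [set S1 :|: S2 | S1 in sh1, S2 in sh2].

Definition star (sh : {set {set VI}}) : {set {set VI}} :=
  [set S : {set VI} | (S != set0) &&
     [exists sh' : {set {set VI}}, (sh' \subset sh) && (S == \bigcup_(U in sh') U)]].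

Definition rel (V : {set VI}) (sh : {set {set VI}}) : {set {set VI}} :=
  [set S in sh | S :&: V != set0].

Definition amgu1 (sh : {set {set VI}}) (b : binding) : {set {set VI}} :=
  let vx := [set b.1] in
  let vt := vars b.2 in
  (sh :\: rel (vx :|: vt) sh) :|: bin (star (rel vx sh)) (star (rel vt sh)).

(* amgu on a substitution: bindings processed one at a time, in list order.
   Quantifying over all lists covers every order of selection. *)
Definition amgu (sh : {set {set VI}}) (sigma : seq binding) : {set {set VI}} :=
  foldl amgu1 sh sigma.

Definition proj (sh : {set {set VI}}) (V : {set VI}) : {set {set VI}} :=
  [set S :&: V | S in sh & S :&: V != set0] :|: [set [set x] | x in ~: V].

End SharingDefs.

(* Main.v *)
Require Import Defs.
From mathcomp Require Import all_boot zify.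

Section Aux.
Variable VI : finType.
Implicit Types (sh A B : {set {set VI}}) (S T U V : {set VI}).

Lemma rhoP k sh S : S \in rhoTSD k sh <->
  (S != set0 /\ forall T, T \subset S -> T != set0 -> #|T| <= k ->
     exists2 U, U \in sh & (T \subset U) && (U \subset S)).
Proof.
split.
- rewrite inE => /andP [Sn0 /forallP H]; split => // T TS Tn Tk.
  case/set0Pn: Tn => y yT.
  have := H (T :\ y); rewrite (subset_trans (subD1set T y) TS) /=.
  have -> : #|T :\ y| < k.
    by move: Tk; rewrite (cardsD1 y T) yT add1n.
  move=> /implyP /(_ isT) /eqP SE.
  have : y \in S by exact: (subsetP TS).
  rewrite {1}SE => /bigcupP [U /andP [Ush /andP [TU US]] yU].
  exists U => //; rewrite US andbT.
  apply/subsetP => z zT; case: (eqVneq z y) => [->//|zy].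
  by apply: (subsetP TU); rewrite !inE zy.
- move=> [Sn0 H]; rewrite inE Sn0 /=; apply/forallP => T.
  apply/implyP => /andP [TS Tk]; rewrite eqEsubset; apply/andP; split.
  + apply/subsetP => y yS.
    have [U Ush /andP [TU US]] : exists2 U, U \in sh & (y |: T \subset U) && (U \subset S).
      apply: H.
      - by rewrite subUset sub1set yS TS.
      - by apply/set0Pn; exists y; rewrite !inE eqxx.
      - by rewrite cardsU1; have := leq_b1 (y \notin T); lia.
    apply/bigcupP; exists U.
      by rewrite Ush US (subset_trans (subsetUr _ _) TU).
    by apply: (subsetP TU); rewrite !inE eqxx.
  + by apply/bigcupsP => U /andP [_ /andP [_ US]].
Qed.

Lemma self_rho k sh S : S \in sh -> S != set0 -> S \in rhoTSD k sh.
Proof. by move=> Ssh Sn0; apply/rhoP; split => // T TS _ _; exists S; rewrite ?TS ?subxx. Qed.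

Definition subr k A B := forall S, S \in A -> S != set0 -> S \in rhoTSD k B.

Lemma sub_rho k A B : subr k A B -> rhoTSD k A \subset rhoTSD k B.
Proof.
move=> H; apply/subsetP => S /rhoP [Sn0 HS]; apply/rhoP; split => // T TS Tn Tk.
have [U UA /andP [TU US]] := HS T TS Tn Tk.
have Un0 : U != set0.
  by apply: contraNneq Tn => U0; rewrite -subset0 -U0.
have /rhoP [_ HU] := H U UA Un0.
have [W WB /andP [TW WU]] := HU T TU Tn Tk.
by exists W; rewrite // TW (subset_trans WU US).
Qed.

Lemma rho_subr k A B : rhoTSD k A = rhoTSD k B -> subr k A B.
Proof. by move=> E S SA Sn0; rewrite -E; apply: self_rho. Qed.

Lemma eq_rho k A B : subr k A B -> subr k B A -> rhoTSD k A = rhoTSD k B.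
Proof. by move=> H1 H2; apply/eqP; rewrite eqEsubset !sub_rho. Qed.

Lemma subr_mono k A B B' : subr k A B -> B \subset B' -> subr k A B'.
Proof.
move=> H BB S SA Sn0; have /rhoP [_ HS] := H S SA Sn0.
apply/rhoP; split => // T TS Tn Tk.
have [U UB UT] := HS T TS Tn Tk; exists U => //; exact: (subsetP BB).
Qed.

Lemma starE V sh (A : {set VI}) : A \in star (Defs.rel V sh) -> A != set0 /\
  forall y, y \in A -> exists C, [/\ C \in sh, C :&: V != set0, y \in C & C \subset A].
Proof.
rewrite inE => /andP [An0 /existsP [sh' /andP [ssub /eqP AE]]]; split => // y.
rewrite AE => /bigcupP [C Csh' yC]; exists C.
move: (subsetP ssub C Csh'); rewrite inE => /andP [Csh CV]; split => //.
exact: bigcup_sup.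
Qed.

Lemma starI V sh (G : {set {set VI}}) : G \subset Defs.rel V sh ->
  \bigcup_(U in G) U != set0 -> \bigcup_(U in G) U \in star (Defs.rel V sh).
Proof. by move=> GS Gn0; rewrite inE Gn0 /=; apply/existsP; exists G; rewrite GS eqxx. Qed.

Lemma anchor k sh1 sh2 V C T : subr k sh1 sh2 -> C \in sh1 -> C :&: V != set0 ->
  T \subset C -> #|T| < k ->
  exists2 U, U \in sh2 & [/\ T \subset U, U :&: V != set0 & U \subset C].
Proof.
move=> H Csh CV TC Tk; case/set0Pn: (CV) => a; rewrite inE => /andP [aC aV].
have Cn0 : C != set0 by apply/set0Pn; exists a.
have /rhoP [_ HC] := H C Csh Cn0.
have h1 : a |: T \subset C by rewrite subUset sub1set aC TC.
have h2 : a |: T != set0 by apply/set0Pn; exists a; rewrite !inE eqxx.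
have h3 : #|a |: T| <= k by rewrite cardsU1; have := leq_b1 (a \notin T); lia.
have [U Ush /andP [TU UC]] := HC (a |: T) h1 h2 h3.
exists U => //; split => //.
- exact: (subset_trans (subsetUr _ _) TU).
- apply/set0Pn; exists a; rewrite inE aV andbT.
  by apply: (subsetP TU); rewrite !inE eqxx.
Qed.
Arguments anchor {k sh1 sh2 V C T}.

Lemma sub_amgu1 k sh1 sh2 b : 1 <= k -> subr k sh1 sh2 ->
  subr k (amgu1 sh1 b) (amgu1 sh2 b).
Proof.
move=> k1 H S; rewrite /amgu1.
set vx := [set b.1]; set vt := vars b.2.
rewrite inE => /orP [/setDP [S1 Srel] | Sbin] Sn0.
- have SV : S :&: (vx :|: vt) == set0.
    by move: Srel; rewrite inE S1 /= negbK.
  have /rhoP [_ HS] := H S S1 Sn0.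
  apply/rhoP; split => // T TS Tn Tk.
  have [U Ush /andP [TU US]] := HS T TS Tn Tk.
  exists U; rewrite ?TU ?US // inE; apply/orP; left; apply/setDP; split => //.
  rewrite inE Ush /= negbK -subset0 -(eqP SV); exact: setSI.
- case/imset2P: Sbin => A B Astar Bstar SE.
  have [An0 HA] := @starE _ _ _ Astar.
  have [Bn0 HB] := @starE _ _ _ Bstar.
  have AS : A \subset S by rewrite SE subsetUl.
  have BS : B \subset S by rewrite SE subsetUr.
  set GA := [set U in Defs.rel vx sh2 | U \subset S].
  set GB := [set U in Defs.rel vt sh2 | U \subset S].
  set BA := \bigcup_(U in GA) U.
  set BB := \bigcup_(U in GB) U.
  have inGA : forall U, U \in sh2 -> U :&: vx != set0 -> U \subset S -> U \subset BA.
    by move=> U Ush UV US; apply: bigcup_sup; rewrite !inE Ush UV US.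
  have inGB : forall U, U \in sh2 -> U :&: vt != set0 -> U \subset S -> U \subset BB.
    by move=> U Ush UV US; apply: bigcup_sup; rewrite !inE Ush UV US.
  have k0 : #|(set0 : {set VI})| < k by rewrite cards0.
  have BAn0 : BA != set0.
    case/set0Pn: An0 => a aA; have [C [Csh CV aC CA]] := HA a aA.
    have [U Ush [_ UV UC]] := anchor H Csh CV (sub0set C) k0.
    case/set0Pn: (UV) => z; rewrite inE => /andP [zU _].
    apply/set0Pn; exists z; apply: (subsetP (inGA U Ush UV _)) => //.
    exact: (subset_trans UC (subset_trans CA AS)).
  have BBn0 : BB != set0.
    case/set0Pn: Bn0 => a aA; have [C [Csh CV aC CB]] := HB a aA.
    have [U Ush [_ UV UC]] := anchor H Csh CV (sub0set C) k0.
    case/set0Pn: (UV) => z; rewrite inE => /andP [zU _].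
    apply/set0Pn; exists z; apply: (subsetP (inGB U Ush UV _)) => //.
    exact: (subset_trans UC (subset_trans CB BS)).
  have BIGin : BA :|: BB \in amgu1 sh2 b.
    rewrite inE; apply/orP; right; apply/imset2P; exists BA BB => //.
    - apply: starI => //; apply/subsetP => U; rewrite inE => /andP [] //.
    - apply: starI => //; apply/subsetP => U; rewrite inE => /andP [] //.
  have BIGS : BA :|: BB \subset S.
    by rewrite subUset; apply/andP; split; apply/bigcupsP => U; rewrite inE => /andP [].
  have cov : forall y, y \in S -> exists C, [/\ C \in sh1, y \in C, C \subset S &
      (C :&: vx != set0) || (C :&: vt != set0)].
    move=> y; rewrite SE inE => /orP [yA | yB].
    + have [C [Csh CV yC CA]] := HA y yA; exists C; split => //.
      * exact: subset_trans CA (subsetUl _ _).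
      * by rewrite CV.
    + have [C [Csh CV yC CB]] := HB y yB; exists C; split => //.
      * exact: subset_trans CB (subsetUr _ _).
      * by rewrite CV orbT.
  apply/rhoP; split => // T TS Tn Tk.
  have [k2|k1'] := leqP 2 k.
  + exists (BA :|: BB) => //; rewrite BIGS andbT.
    apply/subsetP => y yT; have yS := subsetP TS y yT.
    have [C [Csh yC CS /orP [CV|CV]]] := cov y yS.
    * have y1 : [set y] \subset C by rewrite sub1set.
      have c1 : #|[set y]| < k by rewrite cards1.
      have [U Ush [yU UV UC]] := @anchor k sh1 sh2 vx C [set y] H Csh CV y1 c1.
      apply: (subsetP (subsetUl BA BB)); apply: (subsetP (inGA U Ush UV _)).
        exact: subset_trans UC CS.
      by apply: (subsetP yU); rewrite inE.
    * have y1 : [set y] \subset C by rewrite sub1set.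
      have c1 : #|[set y]| < k by rewrite cards1.
      have [U Ush [yU UV UC]] := @anchor k sh1 sh2 vt C [set y] H Csh CV y1 c1.
      apply: (subsetP (subsetUr BA BB)); apply: (subsetP (inGB U Ush UV _)).
        exact: subset_trans UC CS.
      by apply: (subsetP yU); rewrite inE.
  + have T1 : #|T| == 1.
      by rewrite eqn_leq (leq_trans Tk) // ?card_gt0 // -ltnS.
    case/cards1P: T1 => y Ty; subst T.
    have yS : y \in S by rewrite -sub1set.
    have [C [Csh yC CS _]] := cov y yS.
    have Cn0 : C != set0 by apply/set0Pn; exists y.
    have /rhoP [_ HC] := H C Csh Cn0.
    have y1 : [set y] \subset C by rewrite sub1set.
    have [U Ush /andP [TU UC]] := HC [set y] y1 Tn Tk.
    have US := subset_trans UC CS.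
    case: (eqVneq (U :&: (vx :|: vt)) set0) => UV.
    * exists U; rewrite ?TU ?US // inE; apply/orP; left; apply/setDP; split => //.
      by rewrite inE Ush /= negbK; apply/eqP; exact: UV.
    * exists (BA :|: BB) => //; rewrite BIGS andbT.
      move: UV; rewrite setIUr setU_eq0 negb_and => /orP [UV|UV].
      - by rewrite (subset_trans TU) // (subset_trans (inGA U Ush UV US)) ?subsetUl.
      - by rewrite (subset_trans TU) // (subset_trans (inGB U Ush UV US)) ?subsetUr.
Qed.

Lemma sub_proj k sh1 sh2 V : subr k sh1 sh2 -> subr k (proj sh1 V) (proj sh2 V).
Proof.
move=> H S; rewrite /proj inE => /orP [/imsetP [W WP SE] | Ssing] Sn0.
- move: WP; rewrite inE => /andP [W1 WV]; subst S.
  have Wn0 : W != set0 by apply: contraNneq WV => ->; rewrite set0I.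
  have /rhoP [_ HW] := H W W1 Wn0.
  apply/rhoP; split => // T TS Tn Tk.
  have TW : T \subset W := subset_trans TS (subsetIl _ _).
  have TV : T \subset V := subset_trans TS (subsetIr _ _).
  have [U Ush /andP [TU UW]] := HW T TW Tn Tk.
  have UVn0 : U :&: V != set0.
    by apply: contraNneq Tn => E; rewrite -subset0 -E subsetI TU TV.
  exists (U :&: V).
    by rewrite inE; apply/orP; left; apply/imsetP; exists U; rewrite ?inE ?Ush.
  by rewrite subsetI TU TV setSI.
- by apply: self_rho => //; rewrite inE Ssing orbT.
Qed.

End Aux.

Theorem theorem3p16 (VI : finType) (k : nat) (sh1 sh2 : {set {set VI}}) :
  isSH sh1 -> isSH sh2 -> 1 <= k <= #|VI| ->
  rhoTSD k sh1 = rhoTSD k sh2 ->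
  (forall sigma : seq (binding VI), is_subst sigma ->
     rhoTSD k (amgu sh1 sigma) = rhoTSD k (amgu sh2 sigma)) /\
  (forall sh' : {set {set VI}}, isSH sh' ->
     rhoTSD k (sh' :|: sh1) = rhoTSD k (sh' :|: sh2)) /\
  (forall V : {set VI},
     rhoTSD k (proj sh1 V) = rhoTSD k (proj sh2 V)).
Proof.
move=> _ _ /andP [k1 _] E; split; [|split].
- move=> sigma _; rewrite /amgu.
  elim: sigma sh1 sh2 E => //= b s IH s1 s2 E; apply: IH.
  by apply: eq_rho; apply: sub_amgu1 => //; exact: (@rho_subr VI).
- move=> sh' _.
  have gen : forall A B : {set {set VI}}, rhoTSD k A = rhoTSD k B -> @subr VI k (sh' :|: A) (sh' :|: B).
    move=> A B EAB S; rewrite inE => /orP [Ssh|SA] Sn0.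
    + by apply: self_rho => //; rewrite inE Ssh.
      exact: (@subr_mono VI k A B _ (@rho_subr VI k A B EAB) (subsetUr sh' B) S SA Sn0).
  by apply: eq_rho; apply: gen.
- by move=> V; apply: eq_rho; apply: sub_proj; exact: (@rho_subr VI).
Qed.
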